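(* Let $\omega\in\widehat{\mathcal D}$. Then there exists $K=K(\omega)>1$ such that the sequence $\{M_n\}_{n=0}^\infty=\{M_n(\omega,K)\}$ is lacunary, i.e. there exists $C>1$ with $M_{n+1}\ge CM_n$ for all $n\in\mathbb N\cup\{0\}$.
   Context: A radial weight is a nonnegative $\omega\in L^1([0,1))$; $\widehat\omega(r)=\int_r^1\omega(s)ds>0$ for all $r\in[0,1)$. $\omega\in\widehat{\mathcal D}$ means $\widehat\omega(r)\le C\widehat\omega(\frac{1+r}2)$ for some $C>0$ and all $0\le r<1$. For $K>1$ and $n\in\mathbb N\cup\{0\}$, $r_n=r_n(\omega,K)=\inf\{r\in[0,1):\widehat\omega(r)=\widehat\omega(0)K^{-n}\}$, and $M_n=M_n(\omega,K)=E\big(\frac1{1-r_n}\big)$, where $E(x)$ is the integer part of $x$. *)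

(* Defs.v *)
From HB Require Import structures.
From mathcomp Require Import all_boot all_order all_algebra.
From mathcomp Require Import all_classical all_reals all_analysis.
Set Implicit Arguments. Unset Strict Implicit. Unset Printing Implicit Defensive.
Import Order.TTheory GRing.Theory Num.Theory.
Local Open Scope classical_set_scope.
Local Open Scope ring_scope.

Section Defs.
Variable R : realType.
Local Notation mu := (@lebesgue_measure R).

Definition omega_hat (w : R -> R) (r : R) : R :=
  Rintegral mu `[r, 1%R[ w.

Definition radial_weight (w : R -> R) : Prop :=
  [/\ (forall x, 0 <= x < 1 -> 0 <= w x),
      mu.-integrable `[0%R, 1%R[ (fun x => (w x)%:E) &
      (forall r, 0 <= r < 1 -> 0 < omega_hat w r)].

Definition Dhat (w : R -> R) : Prop :=
  exists C : R, 0 < C /\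
    forall r, 0 <= r < 1 -> omega_hat w r <= C * omega_hat w ((1 + r) / 2).

Definition r_seq (w : R -> R) (K : R) (n : nat) : R :=
  inf [set r : R | 0 <= r < 1 /\ omega_hat w r = omega_hat w 0 * K ^- n].

Definition M_seq (w : R -> R) (K : R) (n : nat) : int :=
  Num.floor (1 / (1 - r_seq w K n)).

End Defs.

(* Main.v *)
Require Import Defs.
From HB Require Import structures.
From mathcomp Require Import all_boot all_order all_algebra.
From mathcomp Require Import all_classical all_reals all_analysis.
From mathcomp Require Import ring lra measurable_realfun.
Import Order.TTheory GRing.Theory Num.Theory.
Local Open Scope ring_scope.
Local Open Scope classical_set_scope.

Section S.
Variable R : realType.
Local Notation mu := (@lebesgue_measure R).
Variable w : R -> R.
Hypothesis w0 : forall x, 0 <= x < 1 -> 0 <= w x.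
Hypothesis iw : mu.-integrable `[0%R, 1%R[ (fun x => (w x)%:E).

Let G x := parameterized_integral mu 0 x w.

Lemma int01 : mu.-integrable `[0%R,1%R] (EFin \o w).
Proof.
case/integrableP: iw => mw fw; apply/integrableP; split.
  exact/emeasurable_fun_itv_bndo_bndcP.
rewrite -integral_itv_bndo_bndc //.
exact: measurableT_comp.
Qed.

Lemma hatE r : 0 <= r <= 1 -> omega_hat w r = G 1 - G r.
Proof.
move=> /andP[r0 r1]; rewrite /G /parameterized_integral.
rewrite (@Rintegral_itvB _ _ (BLeft 0) (BRight 1) r int01) ?bnd_simp //.
rewrite Rintegral_itv_obnd_cbnd; last first.
  by apply: integrableS int01 => //; apply: subset_itvr; rewrite bnd_simp.
rewrite /omega_hat Rintegral_itv_bndo_bndc //.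
apply: integrableS int01 => //; apply: subset_itv; rewrite bnd_simp //.
Qed.

Lemma G_mono r s : 0 <= r <= s -> s < 1 -> G r <= G s.
Proof.
move=> /andP[r0 rs] s1.
have ints : mu.-integrable `[0%R, s] (EFin \o w).
  apply: integrableS int01 => //; apply: subset_itvl; rewrite bnd_simp ltW //.
rewrite -subr_ge0 /G /parameterized_integral.
rewrite (@Rintegral_itvB _ _ (BLeft 0) (BRight s) r ints) ?bnd_simp //.
apply: Rintegral_ge0 => x /=; rewrite in_itv /= => /andP[rx xs]; apply: w0.
apply/andP; split; [apply: le_trans (ltW rx) => // | exact: le_lt_trans s1].
Qed.


Lemma G0 : G 0 = 0.
Proof. by rewrite /G /parameterized_integral set_itv1 Rintegral_set1. Qed.

Lemma exists_level t : 0 < t <= omega_hat w 0 ->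
  exists r, 0 <= r < 1 /\ omega_hat w r = t.
Proof.
move=> /andP[t0 th].
have h0 : omega_hat w 0 = G 1 by rewrite hatE ?lexx ?ler01 // G0 subr0.
have hv : Num.min (G 0) (G 1) <= G 1 - t <= Num.max (G 0) (G 1).
  have hp : 0 <= omega_hat w 0 by lra.
  rewrite G0 -h0 min_l ?max_r //; apply/andP; split; lra.
have [c cin Gc] := IVT ler01 (parameterized_integral_continuous ler01 int01) hv.
have {}Gc : G c = G 1 - t := Gc.
move: cin; rewrite in_itv /= => /andP[c0 c1].
have hc : omega_hat w c = t by rewrite hatE ?c0 ?c1 // Gc; lra.
exists c; split => //; rewrite c0 /= lt_neqAle c1 andbT.
apply/negP => /eqP c1'; move: hc; rewrite c1' hatE ?ler01 ?lexx //; lra.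
Qed.

End S.


Theorem lemma2p2 (R : realType) (w : R -> R) :
  radial_weight w -> Dhat w ->
  exists K : R, 1 < K /\
    exists C : R, 1 < C /\
      forall n : nat, C * (M_seq w K n)%:~R <= (M_seq w K n.+1)%:~R.
Proof.
move=> [w0 iw hpos] [C [C0 hC]].
pose K := C + 1.
exists K; split; first by rewrite /K; lra.
exists 2; split; first lra.
pose h0 := omega_hat w 0.
have h0p : 0 < h0 by apply: hpos; rewrite lexx ltr01.
pose t := fun n : nat => h0 * K ^- n.
have K0 : 0 < K by rewrite /K; lra.
have tp : forall n, 0 < t n.
  by move=> n; rewrite /t mulr_gt0 // invr_gt0 exprn_gt0.
have tS : forall n, t n.+1 = t n / K.
  by move=> n; rewrite /t exprSr invfM mulrA.
have tle : forall n, t n <= h0.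
  elim=> [|n IH]; first by rewrite /t expr0 invr1 mulr1.
  rewrite tS; apply: le_trans IH; rewrite ler_pdivrMr //.
  have := tp n; rewrite /K; nra.
have ne : forall n, exists r, 0 <= r < 1 /\ omega_hat w r = t n.
  by move=> n; apply: (@exists_level _ _ iw); rewrite tp tle.
have rlb : forall n, 0 <= r_seq w K n.
  move=> n; apply: lb_le_inf; first exact: ne n.
  by move=> y [/andP[y0 _] _].
have rle : forall n a, 0 <= a < 1 -> omega_hat w a = t n -> r_seq w K n <= a.
  move=> n a ha hta.
  have hlb : has_lbound [set r | 0 <= r < 1 /\ omega_hat w r = omega_hat w 0 * K ^- n].
    by exists 0 => y [/andP[y0 _] _].
  exact: (ge_inf hlb (conj ha hta)).
have r1 : forall n, r_seq w K n < 1.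
  move=> n; have [a [/andP[a0 a1] ha]] := ne n.
  have hA : 0 <= a < 1 by rewrite a0 a1.
  exact: (le_lt_trans (rle n a hA ha) a1).
have key : forall n, (1 + r_seq w K n) / 2 <= r_seq w K n.+1.
  move=> n; have [a [/andP[a0 a1] ha]] := ne n.
  have hA : 0 <= a < 1 by rewrite a0 a1.
  have ra := rle n a hA ha.
  apply: lb_le_inf; first exact: ne n.+1.
  move=> r' [/andP[r0 r1'] hr'].
  suff : (1 + a) / 2 <= r' by lra.
  rewrite leNgt; apply/negP => lt.
  have s1 : (1 + a) / 2 < 1 by lra.
  have s0 : 0 <= (1 + a) / 2 by lra.
  have hrs : 0 <= r' <= (1 + a) / 2 by rewrite r0 ltW.
  have hG := @G_mono _ _ w0 iw r' ((1+a)/2) hrs s1.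
  have hh := hC a (hA).
  have hm : omega_hat w ((1+a)/2) <= omega_hat w r'.
    rewrite !(@hatE _ _ iw); first lra.
      by rewrite r0 ltW.
    by rewrite s0 ltW.
  have {}hr' : omega_hat w r' = t n.+1 := hr'.
  rewrite hr' tS ha in hm hh.
  rewrite ler_pdivlMr // in hm.
  have := tp n; rewrite /K in hm; nra.

move=> n; rewrite /M_seq.
have k := key n; have p0 := r1 n; have p1 := r1 n.+1; have q0 := rlb n.
set r := r_seq w K n in k p0 q0 *; set r' := r_seq w K n.+1 in k p1 *.
set x := 1 / (1 - r); set y := 1 / (1 - r').
have hxy : x + x <= y.
  have -> : x + x = 1 / ((1 - r) / 2) by rewrite /x; field; lra.
  rewrite /y !div1r lef_pV2 ?posrE; lra.
have hfl : (Num.floor x + Num.floor x <= Num.floor y)%R.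
  rewrite floor_ge_int rmorphD /=; have := floor_le x; lra.
rewrite mulr_natl mulr2n -rmorphD /= ler_int //.
Qed.
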